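(* Fix $s\in[-1,1)$. Let $\hat{\varrho}$ be a single-mode bosonic state that is P-classical, i.e. its $s$-parameterized quasiprobability distribution in position-momentum coordinates can be written as $W_{\hat{\varrho}}(q,p;s)=\int dq'\,dp'\,P(q',p')\,W_{q',p'}(q,p;s)$ with $P\ge 0$ and $\int P=1$. Let $w(q,0;s)=\int dp\,W_{\hat{\varrho}}(q,p;s)$ be its $s$-parameterized position tomogram. Let $G\ge 0$ be a normalized function on $\mathbb{R}$ with finite support and define the fictitious tomogram $$w_{\rm f}(p,\tfrac{\pi}{2};s)=\frac{1}{\sqrt{\pi(1-s)}}\int dp'\,G(p')\,e^{-\frac{(p-p')^2}{1-s}}.$$ Then the function $W_{\rm f}(q,p;s):=w(q,0;s)\,w_{\rm f}(p,\tfrac{\pi}{2};s)$ satisfies $$W_{\rm f}(q,p;s)=\int dq'\,dp'\,F(q')G(p')\,W_{q',p'}(q,p;s),\qquad F(q')=\int dp'\,P(q',p'),$$ so that $W_{\rm f}$ is the $s$-parameterized quasiprobability distribution of a bona fide P-classical quantum state (with P-function $F(q')G(p')$). Consequently, if $W_{\rm f}(q,p;s)$ is not the $s$-parameterized distribution of any legitimate quantum state, then $\hat{\varrho}$ is P-nonclassical. In particular this applies to the choices $w_{\rm f}(p,\tfrac{\pi}{2};s)=\frac{1}{\sqrt{\pi(1-s)}}e^{-p^2/(1-s)}$ (the vacuum tomogram) and $w_{\rm f}(p,\tfrac{\pi}{2};s)=w(p,0;s)$ (the state's own tomogram evaluated at $p$).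
   Context: For $q_0,p_0\in\mathbb{R}$ (corresponding to the coherent state $|\alpha\rangle$ with $q_0=\sqrt{2}\,\mathrm{Re}\,\alpha$, $p_0=\sqrt{2}\,\mathrm{Im}\,\alpha$), its $s$-parameterized quasiprobability distribution in position-momentum coordinates is $W_{q_0,p_0}(q,p;s)=\frac{1}{\pi(1-s)}\exp\{-[(q-q_0)^2+(p-p_0)^2]/(1-s)\}$. The $s$-parameterized quasiprobability distribution of an operator $\hat\Lambda$ is $\mathscr{W}_{\hat\Lambda}(\alpha;s)=\mathrm{Tr}\,\hat\Lambda\hat{T}(\alpha;s)$, where $\hat{T}(\alpha;s)=\frac{1}{\pi}\int d^2\xi\,\exp\{\alpha\xi^*-\alpha^*\xi+\tfrac{s}{2}|\xi|^2\}\exp\{\xi a^\dagger-\xi^*a\}$; $s=1$ gives the P-function, $s=0$ the Wigner function, $s=-1$ the Q-function. A state is P-classical if its P-function is a nonnegative probability density, and P-nonclassical otherwise. *)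

(* Defs.v *)
From HB Require Import structures.
From mathcomp Require Import all_boot all_order all_algebra.
From mathcomp Require Import all_classical all_reals all_analysis.
Set Implicit Arguments. Unset Strict Implicit. Unset Printing Implicit Defensive.
Import Order.TTheory GRing.Theory Num.Theory numFieldNormedType.Exports.
Local Open Scope classical_set_scope.
Local Open Scope ring_scope.

Section QuasiProb.
Variable R : realType.

Definition Lint (f : R -> R) : R := Rintegral (@lebesgue_measure R) setT f.

(* s-parameterized quasiprobability distribution of the coherent state
   with phase-space centre (q0,p0) *)
Definition Wcoh (s q0 p0 q p : R) : R :=
  (pi * (1 - s))^-1 * expR (- ((q - q0) ^+ 2 + (p - p0) ^+ 2) / (1 - s)).

Definition is_pdf2 (P : R -> R -> R) : Prop :=
  [/\ measurable_fun setT (fun z : R * R => P z.1 z.2),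
      (forall x y, 0 <= P x y) &
      (\int[@lebesgue_measure R]_x \int[@lebesgue_measure R]_y (P x y)%:E
        = 1%:E)%E].

Definition is_pdf1 (G : R -> R) : Prop :=
  [/\ measurable_fun setT G, (forall x, 0 <= G x) &
      (\int[@lebesgue_measure R]_x (G x)%:E = 1%:E)%E].

Definition bounded_support (G : R -> R) : Prop :=
  exists M : R, forall x, M < `|x| -> G x = 0.

Definition sdist (s : R) (P : R -> R -> R) (q p : R) : R :=
  Lint (fun q' => Lint (fun p' => P q' p' * Wcoh s q' p' q p)).

Definition tomogram (W : R -> R -> R) (q : R) : R := Lint (fun p => W q p).

Definition marginal (P : R -> R -> R) (q' : R) : R := Lint (fun p' => P q' p').

Definition fict_tomo (s : R) (G : R -> R) (p : R) : R :=
  (Num.sqrt (pi * (1 - s)))^-1 *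
    Lint (fun p' => G p' * expR (- (p - p') ^+ 2 / (1 - s))).

Definition vac_tomo (s p : R) : R :=
  (Num.sqrt (pi * (1 - s)))^-1 * expR (- p ^+ 2 / (1 - s)).

Definition Pclassical_sdist (s : R) (W : R -> R -> R) : Prop :=
  exists P, is_pdf2 P /\ forall q p, W q p = sdist s P q p.

End QuasiProb.

(* Main.v *)
Set Warnings "-notation-overridden,-ambiguous-paths,-notation-incompatible-prefix,-deprecated".
Require Import Defs.
From HB Require Import structures.
From mathcomp Require Import all_boot all_order all_algebra.
From mathcomp Require Import all_classical all_reals all_analysis.
From mathcomp Require Import measurable_realfun lebesgue_integral_fubini normal_distribution.
From mathcomp Require Import ring lra.
Import Order.TTheory GRing.Theory Num.Theory numFieldNormedType.Exports.
Local Open Scope ring_scope.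
Section Aux.
Variable R : realType.
Notation mu := (@lebesgue_measure R).
Notation RR := (measurableTypeR R).

Definition gk (a x : R) : R := expR (- x ^+ 2 / a).
Definition cst_c (a : R) : R := Num.sqrt (pi * a).

Lemma gk_ge0 a x : 0 <= gk a x. Proof. exact: expR_ge0. Qed.

Lemma gauss_shift (a m : R) : 0 < a ->
  (\int[mu]_x (gk a (x - m))%:E = (cst_c a)%:E)%E.
Proof.
move=> a0.
set sg := Num.sqrt (a / 2).
have sg2 : sg ^+ 2 = a / 2 by rewrite sqr_sqrtr // divr_ge0 // ltW.
have sg0 : sg != 0 by rewrite gt_eqF // sqrtr_gt0 divr_gt0.
have H := integral_normal_pdf m sg.
rewrite normal_pdfE // in H.
move: H => /=; under eq_integral do rewrite EFinM; move=> H.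
rewrite ge0_integralZl_EFin //= in H; last 3 first.
- by move=> x _; rewrite lee_fin normal_fun_ge0.
- by apply/measurable_EFinP; exact: measurable_normal_fun.
- exact: normal_peak_ge0.
have -> : (\int[mu]_x (gk a (x - m))%:E = \int[mu]_x (normal_fun m sg x)%:E)%E.
  apply: eq_integral => x _; congr (_%:E); rewrite /gk /normal_fun sg2.
  by congr expR; congr (_ / _); rewrite -mulr_natr; field.
have pk0 : 0 < normal_peak sg by exact: normal_peak_gt0.
move: H; case: (\int[mu]_x (normal_fun m sg x)%:E)%E => [r||].
- rewrite -EFinM => /(congr1 fine) /= H.
  have -> : r = (normal_peak sg)^-1 by rewrite -[r](mulKf (lt0r_neq0 pk0)) H mulr1.
  rewrite /normal_peak invrK /cst_c; congr (Num.sqrt _)%:E.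
  by rewrite sg2 -mulr_natr; field.
- by rewrite mulry gtr0_sg // mul1e.
- by rewrite mulrNy gtr0_sg // mul1e.
Qed.

Lemma measurable_gk a : measurable_fun setT (gk a).
Proof.
rewrite /gk; apply: measurableT_comp => //.
apply: measurable_funM => //.
apply: measurable_funN.
exact: measurable_funX.
Qed.

Lemma gk_le1 a x : 0 < a -> gk a x <= 1.
Proof.
move=> a0; rewrite /gk -expR0 ler_expR mulNr oppr_le0.
by rewrite mulr_ge0 ?sqr_ge0 // invr_ge0 ltW.
Qed.

Local Open Scope ereal_scope.

Lemma fineM_ge0 (k : R) (x : \bar R) : fine (k%:E * x) = (k * fine x)%R.
Proof.
case: x => [r||] /=; first by [].
- have [k0|k0|->] := ltgtP k 0%R.
  + by rewrite mulry ltr0_sg // ?EFinN mulN1e /= mulr0.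
  + by rewrite mulry gtr0_sg // mul1e /= mulr0.
  + by rewrite mul0e /= mul0r.
- have [k0|k0|->] := ltgtP k 0%R.
  + by rewrite mulrNy ltr0_sg // ?EFinN mulN1e /= mulr0.
  + by rewrite mulrNy gtr0_sg // mul1e /= mulr0.
  + by rewrite mul0e /= mul0r.
Qed.

Lemma Lint_scale (k : R) (f : R -> R) : (0 <= k)%R ->
  measurable_fun setT (f : RR -> R) -> (forall x, (0 <= f x)%R) ->
  Lint (fun x => k * f x)%R = (k * Lint f)%R.
Proof.
move=> k0 mf f0; rewrite /Lint /Rintegral.
under eq_integral do rewrite EFinM.
rewrite ge0_integralZl_EFin //; first exact: fineM_ge0.
- by move=> x _; rewrite lee_fin.
- exact/measurable_EFinP.
Qed.

Lemma ae_fine (I : RR -> \bar R) (h : RR -> R) :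
  measurable_fun setT I -> (forall x, 0 <= I x) ->
  \int[mu]_x I x < +oo ->
  measurable_fun setT h -> (forall x, (0 <= h x)%R) ->
  \int[mu]_x ((fine (I x)) * h x)%:E = \int[mu]_x (I x * (h x)%:E).
Proof.
move=> mI I0 Ioo mh h0.
have iI : mu.-integrable setT I.
  apply/integrableP; split => //.
  by under eq_integral do rewrite gee0_abs //.
have ae := integrable_ae measurableT iI.
apply: ae_eq_integral => //.
- apply/measurable_EFinP; apply: measurable_funM => //.
  exact: (measurableT_comp (fine_measurable measurableT)).
- by apply: emeasurable_funM => //; exact/measurable_EFinP.
- apply: filterS ae => x /(_ Logic.I) fin _.
  by rewrite EFinM fineK.
Qed.


Lemma mF (K : R -> R -> R) :
  measurable_fun setT (fun z : RR * RR => K z.1 z.2) -> (forall x y, (0 <= K x y)%R) ->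
  measurable_fun setT (fun x : RR => \int[mu]_y (K x y)%:E).
Proof.
move=> mK K0.
apply: (measurable_fun_fubini_tonelli_F (fun z : RR * RR => (K z.1 z.2)%:E)).
- exact/measurable_EFinP.
- by move=> z; rewrite lee_fin.
Qed.

Lemma int2_scale (P : R -> R -> R) (k : R) :
  measurable_fun setT (fun z : RR * RR => P z.1 z.2) -> (forall x y, (0 <= P x y)%R) ->
  (0 <= k)%R ->
  \int[mu]_x \int[mu]_y ((k * P x y)%R)%:E = k%:E * \int[mu]_x \int[mu]_y (P x y)%:E.
Proof.
move=> mP P0 k0.
transitivity (\int[mu]_x (k%:E * \int[mu]_y (P x y)%:E)).
  apply: eq_integral => x _.
  under eq_integral do rewrite EFinM.
  rewrite ge0_integralZl_EFin //.
  - by move=> y _; rewrite lee_fin.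
  - apply/measurable_EFinP.
    have := measurableT_comp mP (measurable_pair1 x).
    by [].
rewrite ge0_integralZl_EFin //.
- by move=> x _; apply: integral_ge0 => y _; rewrite lee_fin.
- exact: mF.
Qed.

Lemma int2_bound (K P : R -> R -> R) (k : R) :
  measurable_fun setT (fun z : RR * RR => K z.1 z.2) -> (forall x y, (0 <= K x y)%R) ->
  measurable_fun setT (fun z : RR * RR => P z.1 z.2) -> (forall x y, (0 <= P x y)%R) ->
  (0 <= k)%R -> (forall x y, (K x y <= k * P x y)%R) ->
  \int[mu]_x \int[mu]_y (P x y)%:E = 1 ->
  \int[mu]_x \int[mu]_y (K x y)%:E <= k%:E.
Proof.
move=> mK K0 mP P0 k0 KP P1.
rewrite -[k%:E]mule1 -P1 -int2_scale //.
apply: ge0_le_integral => //.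
- by move=> x _; apply: integral_ge0 => y _; rewrite lee_fin.
- exact: mF.
- apply: (@mF (fun x y => (k * P x y)%R)).
  + by apply: measurable_funM => //.
  + by move=> x y; rewrite mulr_ge0.
- move=> x _; apply: ge0_le_integral => //.
  + by move=> y _; rewrite lee_fin.
  + apply/measurable_EFinP; exact: (measurableT_comp mK (measurable_pair1 x)).
  + apply/measurable_EFinP; apply: measurable_funM => //.
    exact: (measurableT_comp mP (measurable_pair1 x)).
  + by move=> y _; rewrite lee_fin.
Qed.

Lemma Lint2E (K : R -> R -> R) :
  measurable_fun setT (fun z : RR * RR => K z.1 z.2) -> (forall x y, (0 <= K x y)%R) ->
  \int[mu]_x \int[mu]_y (K x y)%:E < +oo ->
  Lint (fun x => Lint (K x)) = fine (\int[mu]_x \int[mu]_y (K x y)%:E).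
Proof.
move=> mK K0 Koo; rewrite /Lint /Rintegral; congr fine.
transitivity (\int[mu]_x ((fine (\int[mu]_y (K x y)%:E)) * (cst 1%R x))%:E).
  by apply: eq_integral => x _; rewrite /= mulr1.
rewrite (ae_fine _ _ (@mF K mK K0)) //.
- by apply: eq_integral => x _; rewrite mule1.
- by move=> x; apply: integral_ge0 => y _; rewrite lee_fin.
Qed.


Local Close Scope ereal_scope.
Lemma WcohE (s q0 p0 q p : R) : s < 1 ->
  Wcoh s q0 p0 q p = (pi * (1 - s))^-1 * (gk (1 - s) (q - q0) * gk (1 - s) (p - p0)).
Proof.
move=> hs; rewrite /Wcoh /gk -expRD; congr (_ * expR _).
by rewrite -mulrDl opprD.
Qed.

Lemma mgk1 (a q : R) : measurable_fun setT (fun z : RR * RR => gk a (q - z.1)).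
Proof.
apply: (measurableT_comp (measurable_gk a)).
apply: measurable_funB => //; exact: measurable_fst.
Qed.

Lemma mgk2 (a p : R) : measurable_fun setT (fun z : RR * RR => gk a (p - z.2)).
Proof.
apply: (measurableT_comp (measurable_gk a)).
apply: measurable_funB => //; exact: measurable_snd.
Qed.

Lemma mgk12 (a : R) : measurable_fun setT (fun z : RR * RR => gk a (z.1 - z.2)).
Proof.
apply: (measurableT_comp (measurable_gk a)).
by apply: measurable_funB; [exact: measurable_fst|exact: measurable_snd].
Qed.

Lemma mgkR (a q : R) : measurable_fun setT (fun z : RR => gk a (q - z)).
Proof.
apply: (measurableT_comp (measurable_gk a)).
by apply: measurable_funB.
Qed.

Local Open Scope ereal_scope.

Lemma tomoE (s : R) (hs : (s < 1)%R) (P : R -> R -> R) (hP : is_pdf2 P) (q : R) :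
  tomogram (sdist s P) q =
    ((cst_c (1 - s))^-1 * Lint (fun q' => marginal P q' * gk (1 - s) (q - q')))%R.
Proof.
case: hP => mP P0 P1.
set a := (1 - s)%R.
have a0 : (0 < a)%R by rewrite subr_gt0.
set pa := (pi * a)%R.
have pa0 : (0 < pa)%R by rewrite mulr_gt0 // pi_gt0.
set c := cst_c a.
have c0 : (0 < c)%R by rewrite sqrtr_gt0.
have cc : (pa^-1 * c = c^-1)%R.
  have -> : pa = (c ^+ 2)%R by rewrite sqr_sqrtr // ltW.
  by rewrite expr2 invfM -mulrA mulVf ?mulr1 // lt0r_neq0.
pose k := fun q' p' p => (P q' p' * (pa^-1 * (gk a (q - q') * gk a (p - p'))))%R.
have sdE p : sdist s P q p = Lint (fun q' => Lint (fun p' => k q' p' p)).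
  rewrite /sdist; congr Lint; apply/funext => q'; congr Lint; apply/funext => p'.
  by rewrite WcohE.
have k0 q' p' p : (0 <= k q' p' p)%R.
  rewrite /k; apply: mulr_ge0 => //; apply: mulr_ge0; first by rewrite invr_ge0 ltW.
  by apply: mulr_ge0; exact: gk_ge0.
have mk p : measurable_fun setT (fun z : RR * RR => k z.1 z.2 p).
  apply: measurable_funM => //; apply: measurable_funM => //.
  by apply: measurable_funM; [exact: mgk1|exact: mgk2].
have kle p q' p' : (k q' p' p <= pa^-1 * P q' p')%R.
  rewrite /k mulrC; apply: ler_wpM2r => //.
  rewrite -[leRHS]mulr1; apply: ler_wpM2l; first by rewrite invr_ge0 ltW.
  by apply: mulr_ile1; rewrite ?gk_ge0 ?gk_le1.
have Dfin p : \int[mu]_q' \int[mu]_p' (k q' p' p)%:E <= (pa^-1)%:E.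
  apply: (int2_bound (fun x y => k x y p) P (pa^-1) (mk p) (fun x y => k0 x y p) mP P0) => //.
  by rewrite invr_ge0 ltW.
have D0 p : 0 <= \int[mu]_q' \int[mu]_p' (k q' p' p)%:E.
  by apply: integral_ge0 => x _; apply: integral_ge0 => y _; rewrite lee_fin.
rewrite /tomogram.
transitivity (Lint (fun p => fine (\int[mu]_q' \int[mu]_p' (k q' p' p)%:E))).
  congr Lint; apply/funext => p; rewrite sdE Lint2E //.
  exact: le_lt_trans (Dfin p) (ltry _).
rewrite {1}/Lint /Rintegral.
transitivity (fine (\int[mu]_p \int[mu]_q' \int[mu]_p' (k q' p' p)%:E)).
  congr fine; apply: eq_integral => p _; rewrite fineK // ge0_fin_numE //.
  exact: le_lt_trans (Dfin p) (ltry _).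
have mf3 : measurable_fun setT (fun w : (RR * RR) * RR => (k w.1.2 w.2 w.1.1)%:E).
  apply/measurable_EFinP; apply: measurable_funM.
    exact: (measurableT_comp mP (measurable_fun_pair
      (measurableT_comp measurable_snd measurable_fst) measurable_snd)).
  apply: measurable_funM => //; apply: measurable_funM.
    apply: (measurableT_comp (measurable_gk a)); apply: measurable_funB => //.
    exact: (measurableT_comp measurable_snd measurable_fst).
  apply: (measurableT_comp (measurable_gk a)); apply: measurable_funB.
    exact: (measurableT_comp measurable_fst measurable_fst).
  exact: measurable_snd.
rewrite (fubini_tonelli (fun z : RR * RR => \int[mu]_p' (k z.2 p' z.1)%:E)); last 2 first.
  apply: (measurable_fun_fubini_tonelli_F _ mf3).
    by move=> w; rewrite lee_fin.
  by move=> z; apply: integral_ge0 => y _; rewrite lee_fin.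
transitivity (fine (\int[mu]_q' \int[mu]_p' (P q' p' * (c^-1 * gk a (q - q')))%:E)).
  congr fine; apply: eq_integral => q' _ /=.
  rewrite (fubini_tonelli (fun z : RR * RR => (k q' z.2 z.1)%:E)); last 2 first.
    apply/measurable_EFinP; apply: measurable_funM.
      exact: (measurableT_comp mP (measurable_fun_pair (measurable_cst q') measurable_snd)).
    apply: measurable_funM => //; apply: measurable_funM => //.
    exact: mgk12.
    by move=> z; rewrite lee_fin.
  apply: eq_integral => p' _ /=.
  transitivity (\int[mu]_p ((P q' p' * (pa^-1 * gk a (q - q')))%:E * (gk a (p - p'))%:E)).
    by apply: eq_integral => p _; rewrite -EFinM /k !mulrA.
  rewrite ge0_integralZl_EFin //; last 3 first.
  - by move=> p _; rewrite lee_fin gk_ge0.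
  - apply/measurable_EFinP; apply: (measurableT_comp (measurable_gk a)).
    exact: measurable_funB.
  - by apply: mulr_ge0 => //; apply: mulr_ge0; [rewrite invr_ge0 ltW|exact: gk_ge0].
  by rewrite gauss_shift // -EFinM -/c -cc; congr (_%:E); ring.
transitivity (fine (\int[mu]_q' ((\int[mu]_p' (P q' p')%:E) * (c^-1 * gk a (q - q'))%:E))).

  congr fine; apply: eq_integral => q' _.
  under eq_integral do rewrite EFinM.
  rewrite ge0_integralZr //.
  - apply/measurable_EFinP; exact: (measurableT_comp mP (measurable_pair1 q')).
  - by move=> y _; rewrite lee_fin.
  - by rewrite lee_fin; apply: mulr_ge0; [rewrite invr_ge0 ltW|exact: gk_ge0].
rewrite -ae_fine //; last 5 first.
- exact: mF.
- by move=> x; apply: integral_ge0 => y _; rewrite lee_fin.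
- by rewrite P1 ltry.
- by apply: measurable_funM => //; exact: mgkR.
- by move=> x; apply: mulr_ge0; [rewrite invr_ge0 ltW|exact: gk_ge0].
rewrite -Lint_scale; last 3 first.
- by rewrite invr_ge0 ltW.
- apply: measurable_funM; last exact: mgkR.
  exact: (measurableT_comp (fine_measurable measurableT) (mF _ mP P0)).
- move=> x; apply: mulr_ge0; last exact: gk_ge0.
  by apply: fine_ge0; apply: integral_ge0 => y _; rewrite lee_fin.
rewrite /Lint /Rintegral; congr fine; apply: eq_integral => x _.
by rewrite /marginal /Lint /Rintegral mulrCA.
Qed.


Lemma pa_cc (s : R) : (s < 1)%R ->
  ((cst_c (1 - s))^-1 * (cst_c (1 - s))^-1 = (pi * (1 - s))^-1)%R.
Proof.
move=> hs; rewrite -invfM /cst_c -expr2 sqr_sqrtr //.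
by rewrite mulr_ge0 ?pi_ge0 // subr_ge0 ltW.
Qed.

Lemma sdist_prod (s : R) (hs : (s < 1)%R) (F1 G1 : R -> R) :
  measurable_fun setT F1 -> (forall x, (0 <= F1 x)%R) ->
  measurable_fun setT G1 -> (forall x, (0 <= G1 x)%R) -> forall q p,
  sdist s (fun q' p' => F1 q' * G1 p')%R q p =
  ((pi * (1 - s))^-1 * Lint (fun q' => F1 q' * gk (1 - s) (q - q')) *
     Lint (fun p' => G1 p' * gk (1 - s) (p - p')))%R.
Proof.
move=> mF1 F10 mG1 G10 q p.
set a := (1 - s)%R.
have a0 : (0 < a)%R by rewrite subr_gt0.
set pa := (pi * a)%R.
have pa0 : (0 < pa)%R by rewrite mulr_gt0 // pi_gt0.
rewrite /sdist.
transitivity (Lint (fun q' => ((pa^-1 * (F1 q' * gk a (q - q'))) *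
   Lint (fun p' => G1 p' * gk a (p - p')))%R)).
  congr Lint; apply/funext => q'.
  rewrite -Lint_scale; last 3 first.
  - by apply: mulr_ge0; [rewrite invr_ge0 ltW|apply: mulr_ge0 => //; exact: gk_ge0].
  - by apply: measurable_funM => //; exact: mgkR.
  - by move=> x; apply: mulr_ge0 => //; exact: gk_ge0.
  congr Lint; apply/funext => p'; rewrite WcohE //.
  rewrite -/a -/pa; ring.
under [X in Lint X = _]eq_fun do rewrite mulrC.
rewrite Lint_scale; last 3 first.
- by apply: Rintegral_ge0 => // x _; apply: mulr_ge0 => //; exact: gk_ge0.
- by apply: measurable_funM => //; apply: measurable_funM => //; exact: mgkR.
- by move=> x; apply: mulr_ge0; [rewrite invr_ge0 ltW|apply: mulr_ge0 => //; exact: gk_ge0].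
rewrite Lint_scale; last 3 first.
- by rewrite invr_ge0 ltW.
- by apply: measurable_funM => //; exact: mgkR.
- by move=> x; apply: mulr_ge0 => //; exact: gk_ge0.
ring.
Qed.

Lemma pdf_prod (F1 G1 : R -> R) : is_pdf1 F1 -> is_pdf1 G1 ->
  is_pdf2 (fun x y => F1 x * G1 y)%R.
Proof.
case=> mF1 F10 F11 [mG1 G10 G11]; split.
- apply: measurable_funM.
    exact: (measurableT_comp mF1 measurable_fst).
  exact: (measurableT_comp mG1 measurable_snd).
- by move=> x y; apply: mulr_ge0.
- transitivity (\int[mu]_x ((F1 x)%:E * \int[mu]_y (G1 y)%:E)).
    apply: eq_integral => x _; under eq_integral do rewrite EFinM.
    rewrite ge0_integralZl_EFin //.
    - by move=> y _; rewrite lee_fin.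
    - exact/measurable_EFinP.
  rewrite G11; under eq_integral do rewrite mule1.
  exact: F11.
Qed.

Lemma marginal_pdf (P : R -> R -> R) : is_pdf2 P -> is_pdf1 (marginal P).
Proof.
case=> mP P0 P1; split.
- exact: (measurableT_comp (fine_measurable measurableT) (mF _ mP P0)).
- by move=> x; apply: fine_ge0; apply: integral_ge0 => y _; rewrite lee_fin.
- transitivity (\int[mu]_x ((fine (\int[mu]_y (P x y)%:E)) * (cst 1%R x))%:E).
    by apply: eq_integral => x _; rewrite /= mulr1.
  rewrite (ae_fine _ _ (mF _ mP P0)) //.
  - by under eq_integral do rewrite mule1.
  - by move=> x; apply: integral_ge0 => y _; rewrite lee_fin.
  - by rewrite P1 ltry.
Qed.

End Aux.
Arguments gk {R}.
Arguments cst_c {R}.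

Theorem mainTheorem2 (R : realType) (s : R) (hs : -1 <= s < 1)
  (P : R -> R -> R) (hP : is_pdf2 P)
  (G : R -> R) (hG : is_pdf1 G) (hGs : bounded_support G) :
  let W := sdist s P in
  let w := tomogram W in
  let F := marginal P in
  [/\ (forall q p, w q * fict_tomo s G p
                   = sdist s (fun q' p' => F q' * G p') q p),
      is_pdf2 (fun q' p' => F q' * G p'),
      Pclassical_sdist s (fun q p => w q * fict_tomo s G p),
      (forall q p, w q * vac_tomo s p = Lint (fun q' => F q' * Wcoh s q' 0 q p))
    & (forall q p, w q * w p = sdist s (fun q' p' => F q' * F p') q p)
      /\ Pclassical_sdist s (fun q p => w q * w p)].
Proof.
move=> W w F.
case/andP: hs => _ hs1.
have hF := @marginal_pdf R P hP.
have [mF1 F0 _] := hF.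
have [mG G0 _] := hG.
have wE q : w q = ((cst_c (1 - s))^-1 * Lint (fun q' => F q' * gk (1 - s) (q - q'))) by exact: tomoE.
have ftE p : fict_tomo s G p = ((cst_c (1 - s))^-1 * Lint (fun p' => G p' * gk (1 - s) (p - p'))) by [].
have cc := @pa_cc R s hs1.
have P1 : forall q p, w q * fict_tomo s G p = sdist s (fun q' p' => F q' * G p') q p.
  move=> q p; rewrite sdist_prod // wE ftE -cc; ring.
have P5 : forall q p, w q * w p = sdist s (fun q' p' => F q' * F p') q p.
  move=> q p; rewrite sdist_prod // !wE -cc; ring.
split.
- exact: P1.
- exact: pdf_prod.
- by exists (fun q' p' => F q' * G p'); split; [exact: pdf_prod|exact: P1].
- move=> q p; rewrite wE /vac_tomo.
  transitivity (((pi * (1 - s))^-1 * gk (1 - s) p) *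
    Lint (fun q' => F q' * gk (1 - s) (q - q'))).
    by rewrite -cc /gk /cst_c; ring.
  have a0 : 0 < 1 - s by rewrite subr_gt0.
  rewrite -Lint_scale; last 3 first.
  - by apply: mulr_ge0; [rewrite invr_ge0 mulr_ge0 ?pi_ge0 ?ltW|exact: gk_ge0].
  - by apply: measurable_funM => //; exact: mgkR.
  - by move=> x; apply: mulr_ge0 => //; exact: gk_ge0.
  by congr Lint; apply/funext => q'; rewrite WcohE // subr0; ring.
- split; first exact: P5.
  by exists (fun q' p' => F q' * F p'); split; [exact: pdf_prod|exact: P5].
Qed.
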